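(* There exists a structure $\langle M,\mathsf{S}\rangle$, with $M$ a set and $\mathsf{S}\subseteq M\times\mathcal{P}(M)$, that satisfies (S1), (S2), (S3), (S4), the condition ($\mathrm{S}\Sigma$): ''for every $x\in M$ and every non-empty family $\mathcal{A}$ of subsets of $M$ with $x\,\mathsf{S}\,A$ for all $A\in\mathcal{A}$, one has $x\,\mathsf{S}\,\bigcup\mathcal{A}$'', and the condition ''for all $x,y\in M$, $x\,\mathsf{S}\,\{y\}$ implies $x=y$'', but does not satisfy (S5).
   Context: For a set $M$ and a relation $\mathsf{S}\subseteq M\times\mathcal{P}(M)$ define: $x\sqsubseteq_{\mathsf{S}} y$ iff there is $X\subseteq M$ with $y\,\mathsf{S}\,X$ and $x\in X$; $\mathrm{I}(x)=\{y\in M\mid y\sqsubseteq_{\mathsf{S}} x\}$ and for $A\subseteq M$, $\mathrm{I}(A)=\bigcup_{a\in A}\mathrm{I}(a)$; $x$ s-overlaps $y$ iff there are $X,Y\subseteq M$ with $x\,\mathsf{S}\,X$, $y\,\mathsf{S}\,Y$, $X\cap Y\neq\emptyset$; a set $A\subseteq M$ is pre-dense in $B\subseteq M$ iff for every $b\in B$ there is $a\in A$ such that $a$ s-overlaps $b$. Axioms: (S1) for every non-empty $X\subseteq M$ there is $x\in M$ with $x\,\mathsf{S}\,X$; (S2) $x\,\mathsf{S}\,X\wedge y\,\mathsf{S}\,X\to x=y$; (S3) $x\,\mathsf{S}\,X\wedge y\,\mathsf{S}\,Y\wedge x\in Y\to y\,\mathsf{S}\,(X\cup Y)$; (S4) if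 $x\,\mathsf{S}\,X$, $x\,\mathsf{S}\,Y$ and $y\in Y$, then there are $z\in X$ and $Z,U\subseteq M$ with $z\,\mathsf{S}\,Z$, $y\,\mathsf{S}\,U$ and $Z\cap U\neq\emptyset$; (S5) for all $x\in M$ and $X\subseteq M$: if $X$ is pre-dense in $\mathrm{I}(x)$ then $x\,\mathsf{S}\,(\mathrm{I}(x)\cap\mathrm{I}(X))$. *)

(* Defs.v *)
(* Subsets of M are predicates M -> Prop; S : M -> (M -> Prop) -> Prop
   is the relation S ⊆ M × P(M). *)

Section SDefs.
Context {M : Type} (S : M -> (M -> Prop) -> Prop).

Definition sle (x y : M) : Prop := exists X : M -> Prop, S y X /\ X x.

Definition Iof (x : M) : M -> Prop := fun y => sle y x.

Definition IofSet (A : M -> Prop) : M -> Prop := fun y => exists a, A a /\ Iof a y.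

Definition soverlaps (x y : M) : Prop :=
  exists X Y : M -> Prop, S x X /\ S y Y /\ exists z, X z /\ Y z.

Definition predense (A B : M -> Prop) : Prop :=
  forall b, B b -> exists a, A a /\ soverlaps a b.

Definition S1 : Prop := forall X : M -> Prop, (exists z, X z) -> exists x, S x X.
Definition S2 : Prop := forall (x y : M) (X : M -> Prop), S x X -> S y X -> x = y.
Definition S3 : Prop := forall (x y : M) (X Y : M -> Prop),
  S x X -> S y Y -> Y x -> S y (fun z => X z \/ Y z).
Definition S4 : Prop := forall (x y : M) (X Y : M -> Prop),
  S x X -> S x Y -> Y y ->
  exists z, X z /\ exists Z U : M -> Prop, S z Z /\ S y U /\ exists w, Z w /\ U w.
Definition S5 : Prop := forall (x : M) (X : M -> Prop),
  predense X (Iof x) -> S x (fun z => Iof x z /\ IofSet X z).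

Definition SSigma : Prop := forall (x : M) (F : (M -> Prop) -> Prop),
  (exists A, F A) -> (forall A, F A -> S x A) ->
  S x (fun z => exists A, F A /\ A z).

Definition SSingleton : Prop := forall x y : M, S x (fun z => z = y) -> x = y.

End SDefs.

(* Main.v *)
Require Import Defs.
From Stdlib Require Import Classical.

Definition Sb (x : bool) (X : bool -> Prop) : Prop :=
  (exists z, X z) /\ (x = true <-> X true).

Theorem mainTheorem11 :
  exists (M : Type) (S : M -> (M -> Prop) -> Prop),
    S1 S /\ S2 S /\ S3 S /\ S4 S /\ SSigma S /\ SSingleton S /\ ~ S5 S.
Proof.
  exists bool, Sb.
  split; [|split; [|split; [|split; [|split; [|split]]]]].
  - intros X HX. destruct (classic (X true)) as [H|H].
    + exists true. split; [exact HX|]. split; intros; [exact H|reflexivity].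
    + exists false. split; [exact HX|]. split; intros E; [discriminate|contradiction].
  - intros x y X [_ Hx] [_ Hy].
    destruct x, y; try reflexivity.
    + discriminate (proj2 Hy (proj1 Hx eq_refl)).
    + discriminate (proj2 Hx (proj1 Hy eq_refl)).
  - intros x y X Y [HXn Hx] [HYn Hy] HYx. split.
    + destruct HYn as [z Hz]. exists z. right. exact Hz.
    + split.
      * intros E. right. apply Hy. exact E.
      * intros [H|H].
        -- apply Hy. rewrite <- (proj2 Hx H). exact HYx.
        -- apply Hy. exact H.
  - intros x y X Y [[z0 Hz0] _] _ _.
    exists z0. split; [exact Hz0|].
    exists (fun w => w = false \/ w = z0), (fun w => w = false \/ w = y).
    split; [|split].
    + split; [exists false; left; reflexivity|].
      split; intros E; [right; symmetry; exact E| destruct E as [E|E]; [discriminate|symmetry; exact E]].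
    + split; [exists false; left; reflexivity|].
      split; intros E; [right; symmetry; exact E| destruct E as [E|E]; [discriminate|symmetry; exact E]].
    + exists false. split; left; reflexivity.
  - intros x F [A HA] HF. split.
    + destruct (HF A HA) as [[z Hz] _]. exists z. exists A. split; assumption.
    + split.
      * intros E. exists A. split; [exact HA|]. apply (HF A HA). exact E.
      * intros [B [HB HBt]]. apply (HF B HB). exact HBt.
  - intros x y [_ H]. destruct x, y; try reflexivity.
    + discriminate (proj1 H eq_refl).
    + discriminate (proj2 H eq_refl).
  - intros H5.
    assert (Hp : predense Sb (fun z => z = false) (Iof Sb true)).
    { intros b _. exists false. split; [reflexivity|].
      exists (fun z => z = false), (fun z => z = false \/ z = b).
      split; [|split].
      - split; [exists false; reflexivity|]. split; intros E; discriminate.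
      - split; [exists false; left; reflexivity|].
        split; intros E; [right; symmetry; exact E| destruct E as [E|E]; [discriminate|symmetry; exact E]].
      - exists false. split; [reflexivity|left; reflexivity]. }
    destruct (H5 true _ Hp) as [_ [H _]].
    destruct (H eq_refl) as [_ [a [Ha [X' [[_ HX'] HX't]]]]].
    subst a. discriminate (proj2 HX' HX't).
Qed.
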